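(* Let $n\ge 3$ and let $C\in\mathbb{R}^{n\times n}$ be nonnegative, doubly stochastic, irreducible, with zero diagonal entries. Let $x(s)$ evolve by the Modified DeGroot-Friedkin model $x(s+1)=C^\top x(s)+X(s)x(s)-C^\top X(s)x(s)$, $X(s)=\mathrm{diag}(x(s))$, with $x(0)\in\Delta\setminus\{e_1,\dots,e_n\}$. Let $x(s)_{\min}=\min_i x_i(s)$ and $x(s)_{\max}=\max_i x_i(s)$. Then for all $s\ge 0$ and all $i$, $x(s)_{\min}\le x_i(s+1)\le x(s)_{\max}$; in particular $x(s+1)_{\min}\ge x(s)_{\min}$ and $x(s+1)_{\max}\le x(s)_{\max}$.
   Context: $\Delta=\{x\in\mathbb{R}^n: x\ge 0,\ \sum_i x_i=1\}$; $e_i$ is the $i$th standard basis vector. *)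

(* Defs.v *)
(* the statement is purely algebraic/order-theoretic, so we
   state it over an arbitrary real field R (R = the reals is an instance). *)
From HB Require Import structures.
From mathcomp Require Import all_boot all_order all_algebra.
Set Implicit Arguments. Unset Strict Implicit. Unset Printing Implicit Defensive.
Import Order.TTheory GRing.Theory Num.Theory.
Local Open Scope ring_scope.

Definition nonneg_mx (R : realFieldType) n (C : 'M[R]_n) : Prop :=
  forall i j, 0 <= C i j.

Definition doubly_stochastic (R : realFieldType) n (C : 'M[R]_n) : Prop :=
  nonneg_mx C /\ (forall i, \sum_j C i j = 1) /\ (forall j, \sum_i C i j = 1).

Definition irreducible_mx (R : realFieldType) n (C : 'M[R]_n) : Prop :=
  forall i j : 'I_n, connect (fun a b => C a b != 0) i j.

Definition zero_diag (R : realFieldType) n (C : 'M[R]_n) : Prop :=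
  forall i, C i i = 0.

Definition in_simplex (R : realFieldType) n (x : 'cV[R]_n) : Prop :=
  (forall i, 0 <= x i 0) /\ \sum_i x i 0 = 1.

Definition basis_vec {R : realFieldType} n (i : 'I_n) : 'cV[R]_n := delta_mx i 0.

Definition mdf_step (R : realFieldType) n (C : 'M[R]_n) (x : 'cV[R]_n) : 'cV[R]_n :=
  let X := diag_mx (x^T) in
  C^T *m x + X *m x - C^T *m (X *m x).

(* min / max entry of a vector (for n > 0 these are the true min / max) *)
Definition vmin (R : realFieldType) n (x : 'cV[R]_n) : R :=
  let l := [seq x i 0 | i <- enum 'I_n] in \big[Num.min/head 0 l]_(a <- l) a.
Definition vmax (R : realFieldType) n (x : 'cV[R]_n) : R :=
  let l := [seq x i 0 | i <- enum 'I_n] in \big[Num.max/head 0 l]_(a <- l) a.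

(* Main.v *)
Require Import Defs.
From HB Require Import structures.
From mathcomp Require Import all_boot all_order all_algebra.
From mathcomp Require Import ring lra.
Import Order.TTheory GRing.Theory Num.Theory.
Local Open Scope ring_scope.

Section S.
Variable R : realFieldType.

Lemma bmin_le (l : seq R) idx y : y \in l -> \big[Num.min/idx]_(a <- l) a <= y.
Proof.
elim: l => [|b l IH] //; rewrite big_cons inE ge_min => /orP [/eqP ->|/IH ->];
  by rewrite ?lexx ?orbT.
Qed.

Lemma bmin_mem (l : seq R) idx : \big[Num.min/idx]_(a <- l) a \in idx :: l.
Proof.
elim: l => [|b l IH]; first by rewrite big_nil inE eqxx.
rewrite big_cons minEle; case: ifP => _; first by rewrite !inE eqxx orbT.
move: IH; rewrite !inE => /orP [->|->] //; by rewrite !orbT.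
Qed.

Lemma bmax_ge (l : seq R) idx y : y \in l -> y <= \big[Num.max/idx]_(a <- l) a.
Proof.
elim: l => [|b l IH] //; rewrite big_cons inE le_max => /orP [/eqP ->|/IH ->];
  by rewrite ?lexx ?orbT.
Qed.

Lemma bmax_mem (l : seq R) idx : \big[Num.max/idx]_(a <- l) a \in idx :: l.
Proof.
elim: l => [|b l IH]; first by rewrite big_nil inE eqxx.
rewrite big_cons maxEle; case: ifP => _; last by rewrite !inE eqxx orbT.
move: IH; rewrite !inE => /orP [->|->] //; by rewrite !orbT.
Qed.

Variable n : nat.
Implicit Types x : 'cV[R]_n.

Lemma vmin_le x i : vmin x <= x i 0.
Proof. by apply: bmin_le; apply: map_f; rewrite mem_enum. Qed.
Lemma vmax_ge x i : x i 0 <= vmax x.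
Proof. by apply: bmax_ge; apply: map_f; rewrite mem_enum. Qed.

Lemma head_in x (i0 : 'I_n) y :
  y \in head 0 [seq x i 0 | i <- enum 'I_n] :: [seq x i 0 | i <- enum 'I_n] ->
  exists i, y = x i 0.
Proof.
have ne : [seq x i 0 | i <- enum 'I_n] != [::].
  by rewrite -size_eq0 size_map size_enum_ord -lt0n (leq_ltn_trans (leq0n _) (ltn_ord i0)).
case E: [seq x i 0 | i <- enum 'I_n] ne => [|b l] // _.
have Hb : b \in [seq x i 0 | i <- enum 'I_n] by rewrite E inE eqxx.
rewrite /= inE -E => /orP [/eqP ->|H].
  by case/mapP: Hb => i _ ->; exists i.
by case/mapP: H => i _ ->; exists i.
Qed.

Lemma vmin_ex x (i0 : 'I_n) : exists i, vmin x = x i 0.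
Proof. by apply: (head_in x i0); apply: bmin_mem. Qed.
Lemma vmax_ex x (i0 : 'I_n) : exists i, vmax x = x i 0.
Proof. by apply: (head_in x i0); apply: bmax_mem. Qed.

Lemma step_entry (C : 'M[R]_n) x i :
  mdf_step C x i 0 = x i 0 ^+ 2 + \sum_j C j i * (x j 0 * (1 - x j 0)).
Proof.
rewrite /mdf_step mul_diag_mx !mxE.
rewrite [_ + (x i 0 * x i 0)]addrC -addrA expr2; congr (_ + _).
rewrite -sumrB; apply: eq_bigr => j _; rewrite !mxE; ring.
Qed.


Lemma pair_le x (hs : in_simplex x) j k : j != k -> x j 0 + x k 0 <= 1.
Proof.
case: hs => h0 h1 ne; rewrite -h1 (bigD1 j) //= (bigD1 k) /=; last by rewrite eq_sym.
rewrite addrA lerDl; apply: sumr_ge0 => l _; exact: h0.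
Qed.

Lemma step_bounds (C : 'M[R]_n) x (ds : doubly_stochastic C) (hs : in_simplex x) i :
  vmin x <= mdf_step C x i 0 <= vmax x.
Proof.
case: ds => Cn [_ Ccol]; have h0 := proj1 hs.
have hxi := h0 i.
rewrite step_entry; apply/andP; split.
- have [k Hk] := vmin_ex x i.
  have hmi := vmin_le x i; have hm0 : 0 <= vmin x by rewrite Hk.
  have hf : forall j, vmin x * (1 - vmin x) <= x j 0 * (1 - x j 0).
    move=> j; have hj := vmin_le x j; case: (eqVneq j k) => [->|jk].
      by rewrite Hk.
    have := pair_le x hs j k jk; rewrite -Hk => hp; nra.
  have : \sum_j C j i * (vmin x * (1 - vmin x)) <= \sum_j C j i * (x j 0 * (1 - x j 0)).
    by apply: ler_sum => j _; apply: ler_wpM2l.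
  rewrite -mulr_suml Ccol mul1r => hs2; nra.
- have [k Hk] := vmax_ex x i.
  have hmi := vmax_ge x i.
  have hf : forall j, x j 0 * (1 - x j 0) <= vmax x * (1 - vmax x).
    move=> j; have hj := vmax_ge x j; have := h0 j; case: (eqVneq j k) => [->|jk].
      by rewrite Hk.
    have := pair_le x hs j k jk; rewrite -Hk => hp; nra.
  have : \sum_j C j i * (x j 0 * (1 - x j 0)) <= \sum_j C j i * (vmax x * (1 - vmax x)).
    by apply: ler_sum => j _; apply: ler_wpM2l.
  rewrite -mulr_suml Ccol mul1r => hs2; nra.
Qed.

Lemma step_simplex (C : 'M[R]_n) x (ds : doubly_stochastic C) (hs : in_simplex x) :
  in_simplex (mdf_step C x).
Proof.
split.
  move=> i; apply: le_trans (andP (step_bounds C x ds hs i)).1.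
  by have [k ->] := vmin_ex x i; exact: (proj1 hs).
case: ds => Cn [Crow _].
under eq_bigr do rewrite step_entry.
rewrite big_split /= exchange_big /=.
under [X in _ + X = _]eq_bigr do rewrite -mulr_suml Crow mul1r.
rewrite -big_split /= -[RHS](proj2 hs); apply: eq_bigr => j _; ring.
Qed.
End S.

Theorem lemma4 (R : realFieldType) (n : nat) (C : 'M[R]_n) (x : nat -> 'cV[R]_n) :
  (3 <= n)%N ->
  doubly_stochastic C -> irreducible_mx C -> zero_diag C ->
  (forall s, x s.+1 = mdf_step C (x s)) ->
  in_simplex (x 0%N) -> (forall i : 'I_n, x 0%N <> basis_vec (R:=R) i) ->
  forall s : nat,
    (forall i : 'I_n, vmin (x s) <= x s.+1 i 0 <= vmax (x s)) /\
    vmin (x s) <= vmin (x s.+1) /\ vmax (x s.+1) <= vmax (x s).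
Proof.
move=> n3 ds _ _ hx h0 _ s.
have i0 : 'I_n by exists 0%N; apply: leq_trans n3.
have hs : in_simplex (x s).
  elim: s => [|s IH] //; rewrite hx; exact: step_simplex.
have hb : forall i : 'I_n, vmin (x s) <= x s.+1 i 0 <= vmax (x s).
  by move=> i; rewrite hx; exact: step_bounds.
split => //; split.
- by have [k ->] := @vmin_ex R n (x s.+1) i0; case/andP: (hb k).
- by have [k ->] := @vmax_ex R n (x s.+1) i0; case/andP: (hb k).
Qed.
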